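(* $\beta(3,13,4) = 7$.
   Context: For integers $v \ge k \ge 2$, a $(v,k)$-packing is a pair $(X,\mathcal{B})$ where $X$ is a set of $v$ points and $\mathcal{B}$ is a set of $k$-subsets of $X$ (blocks) such that every pair of distinct points lies in at most one block. A partial parallel class (PPC) is a set of pairwise disjoint blocks; its size is the number of blocks. A PPC of size $\rho$ is maximum if the packing has no PPC of size $\rho+1$. $\beta(\rho,v,k)$ denotes the maximum number of blocks in a $(v,k)$-packing in which the maximum PPC has size $\rho$. *)

(* Defs.v *)
From mathcomp Require Import all_boot.
Set Implicit Arguments. Unset Strict Implicit. Unset Printing Implicit Defensive.

Definition is_packing (v k : nat) (B : {set {set 'I_v}}) : bool :=
  [forall b in B, #|b| == k] &&
  [forall x : 'I_v, forall y : 'I_v,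
     (x != y) ==> (#|[set b in B | (x \in b) && (y \in b)]| <= 1)].

Definition is_ppc (v : nat) (B P : {set {set 'I_v}}) : bool :=
  (P \subset B) &&
  [forall b1 in P, forall b2 in P, (b1 != b2) ==> [disjoint b1 & b2]].

Definition max_ppc_size (v : nat) (B : {set {set 'I_v}}) (rho : nat) : bool :=
  [exists P : {set {set 'I_v}}, is_ppc B P && (#|P| == rho)] &&
  ~~ [exists P : {set {set 'I_v}}, is_ppc B P && (#|P| == rho.+1)].

Definition beta (rho v k : nat) : nat :=
  \max_(B : {set {set 'I_v}} | is_packing k B && max_ppc_size B rho) #|B|.

(* Main.v *)
Require Import Defs.
From mathcomp Require Import all_boot.
From mathcomp Require Import zify.

Set Implicit Arguments. Unset Strict Implicit. Unset Printing Implicit Defensive.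

Lemma card_bigcup_le (T I : finType) (P : pred I) (F : I -> {set T}) :
  #|\bigcup_(i | P i) F i| <= \sum_(i | P i) #|F i|.
Proof.
apply: (big_rec2 (fun (X : {set T}) (n : nat) => #|X| <= n)); first by rewrite cards0.
move=> i X n _ ih; apply: leq_trans (leq_card_setU _ _).1 _; by rewrite leq_add2l.
Qed.

Lemma cover_card (T : finType) (F : {set {set T}}) k :
  {in F, forall A : {set T}, #|A| = k} ->
  {in F &, forall A B : {set T}, A != B -> [disjoint A & B]} ->
  #|cover F| = #|F| * k.
Proof.
move=> Hk /trivIsetP /eqP <-.
by rewrite (eq_bigr (fun _ => k)) ?sum_nat_const // => A /Hk.
Qed.

Lemma pack_inter v (B : {set {set 'I_v}}) b1 b2 :
  is_packing 4 B -> b1 \in B -> b2 \in B -> b1 != b2 -> #|b1 :&: b2| <= 1.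
Proof.
move=> /andP[_ /forallP H] h1 h2 ne; rewrite leqNgt; apply/negP.
move=> /card_gt1P [x [y [xi yi xy]]].
move: xi yi; rewrite !inE => /andP[x1 x2] /andP[y1 y2].
have := H x => /forallP /(_ y) /implyP /(_ xy); rewrite leqNgt => /negP; apply.
apply/card_gt1P; exists b1, b2; by rewrite !inE h1 h2 x1 x2 y1 y2 ne.
Qed.

Lemma ppc_cover v (B P : {set {set 'I_v}}) :
  is_packing 4 B -> is_ppc B P -> #|cover P| = #|P| * 4.
Proof.
move=> pk /andP[sPB /forallP dP].
have Hc : {in B, forall A : {set 'I_v}, #|A| = 4}.
  by move: pk => /andP[/forallP H _] A AB; apply/eqP; have := H A; rewrite AB.
apply: cover_card => [A AP|A1 A2 A1P A2P ne].
  by apply: Hc; apply: (subsetP sPB).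
by have := dP A1 => /implyP /(_ A1P) /forallP /(_ A2) /implyP /(_ A2P) /implyP /(_ ne).
Qed.

Lemma no_ppc4 (B P : {set {set 'I_13}}) :
  is_packing 4 B -> is_ppc B P -> #|P| != 4.
Proof.
move=> pk pp; apply/negP => /eqP P4.
have := ppc_cover pk pp; rewrite P4 => E.
by have := max_card (mem (cover P)); rewrite E card_ord.
Qed.

Lemma upper (B P : {set {set 'I_13}}) :
  is_packing 4 B -> is_ppc B P -> #|P| = 3 -> #|B| <= 7.
Proof.
move=> pk pp P3.
have Uc := ppc_cover pk pp; rewrite P3 /= in Uc.
move: (pp) => /andP[sPB /forallP dP].
have Hc : {in B, forall A : {set 'I_13}, #|A| = 4}.
  by move: pk => /andP[/forallP H _] A AB; apply/eqP; have := H A; rewrite AB.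
set U := cover P in Uc.
have : #|~: U| == 1.
  by have := cardsC U; rewrite card_ord Uc => /eqP; rewrite -[13]/(12 + 1) eqn_add2l.
case/cards1P => z Hz.
set C := B :\: P.
have zC : forall b, b \in C -> z \in b.
  move=> b; rewrite inE => /andP[bP bB].
  have le3 : #|b :&: U| <= 3.
    have sub : b :&: U \subset \bigcup_(A in P) (b :&: A).
      apply/subsetP => x; rewrite inE => /andP[xb /bigcupP[A AP xA]].
      by apply/bigcupP; exists A => //; rewrite inE xb xA.
    apply: (leq_trans (subset_leq_card sub)).
    apply: leq_trans (card_bigcup_le _ _) _.
    apply: (@leq_trans (\sum_(A in P) 1)); last by rewrite sum1_card P3.
    apply: leq_sum => A AP.
    apply: (pack_inter pk bB); first by apply: (subsetP sPB).
    by apply/eqP => E; rewrite E AP in bP.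
  have := cardsID U b; rewrite (Hc b bB).
  case: (set_0Vmem (b :\: U)) => [->|[y]]; first by rewrite cards0 => E; move: le3 E; clear; lia.
  rewrite inE => /andP[yU yb] _.
  have : y \in ~: U by rewrite inE.
  by rewrite Hz inE => /eqP <-.
set Q := [set b :\ z | b in C].
have QC : #|Q| = #|C|.
  apply: card_in_imset => b1 b2 h1 h2 E.
  by rewrite -(setD1K (zC _ h1)) -(setD1K (zC _ h2)) E.
have Cin : forall b, b \in C -> b \in B by move=> b; rewrite inE => /andP[].
have Qcov : #|cover Q| = #|Q| * 3.
  apply: cover_card.
    move=> A /imsetP [b bC ->].
    by have := cardsD1 z b; rewrite zC // Hc ?Cin // add1n => -[].
  move=> A1 A2 /imsetP [b1 h1 ->] /imsetP [b2 h2 ->] ne.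
  have ne' : b1 != b2 by apply: contraNneq ne => ->.
  have := pack_inter pk (Cin _ h1) (Cin _ h2) ne'.
  rewrite (cardsD1 z) inE !zC // add1n ltnS leqn0 cards_eq0 => /eqP E.
  rewrite -setI_eq0; apply/eqP; apply/setP => x; move/setP: E => /(_ x).
  by rewrite !inE; case: (x == z); case: (x \in b1); case: (x \in b2).
have : #|cover Q| <= 12.
  apply: (@leq_trans #|[set~ z]|); last by rewrite cardsC1 card_ord.
  apply: subset_leq_card; apply/subsetP => x /bigcupP [A /imsetP [b _ ->]].
  by rewrite !inE => /andP[].
rewrite Qcov QC => HC.
have HC4 : #|C| <= 4 by rewrite -(leq_pmul2r (_ : 0 < 3)) //; apply: leq_trans HC _.
rewrite -(cardsID P B) (setIidPr sPB) P3.
by rewrite -/C; move: HC4; clear; lia.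
Qed.

Lemma cardblk (p : pred nat) : #|[set x : 'I_13 | p (val x)]| = count p (iota 0 13).
Proof.
rewrite cardsE cardE /enum_mem size_filter -enumT -val_enum_ord count_map.
by apply: eq_count => x.
Qed.

Definition blk (l : seq nat) : {set 'I_13} := [set x : 'I_13 | val x \in l].
Definition L : seq (seq nat) := [:: [::0;1;2;3]; [::4;5;6;7]; [::8;9;10;11];
  [::12;0;4;8]; [::12;1;5;9]; [::12;2;6;10]; [::12;3;7;11]].
Definition L3 : seq (seq nat) := [:: [::0;1;2;3]; [::4;5;6;7]; [::8;9;10;11]].

Lemma Lok1 : all (fun l1 : seq nat => all (fun l2 : seq nat => (l1 == l2) ||
  (count (fun i : nat => (i \in l1) && (i \in l2)) (iota 0 13) <= 1)) L) L.
Proof. by []. Qed.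
Lemma Lok2 : all (fun l : seq nat => count (fun i : nat => i \in l) (iota 0 13) == 4) L.
Proof. by []. Qed.
Lemma Lok3 : all (fun l1 : seq nat => all (fun l2 : seq nat => (l1 == l2) ||
  (count (fun i : nat => (i \in l1) && (i \in l2)) (iota 0 13) == 0)) L3) L3.
Proof. by []. Qed.

Lemma blkI l1 l2 : blk l1 :&: blk l2 = [set x : 'I_13 | (val x \in l1) && (val x \in l2)].
Proof. by apply/setP => x; rewrite !inE. Qed.

Lemma blk_card l : l \in L -> #|blk l| = 4.
Proof. by move=> lL; apply/eqP; rewrite /blk (cardblk (fun i => i \in l)); move/allP: Lok2 => /(_ l lL). Qed.

Lemma blk_inter l1 l2 : l1 \in L -> l2 \in L -> l1 != l2 -> #|blk l1 :&: blk l2| <= 1.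
Proof.
move=> h1 h2 ne; rewrite blkI (cardblk (fun i => (i \in l1) && (i \in l2))).
by move/allP: Lok1 => /(_ l1 h1) /allP /(_ l2 h2); rewrite (negbTE ne).
Qed.

Lemma blk_inj : {in L &, injective blk}.
Proof.
move=> l1 l2 h1 h2 E; apply/eqP; apply/negP => /negP ne.
by have := blk_inter h1 h2 ne; rewrite -E setIid blk_card.
Qed.

Definition B0 : {set {set 'I_13}} := [set b in map blk L].
Definition P0 : {set {set 'I_13}} := [set b in map blk L3].

Lemma L3L : {subset L3 <= L}.
Proof. by move=> l; rewrite !inE => /or3P [] /eqP ->. Qed.

Lemma B0pack : is_packing 4 B0.
Proof.
apply/andP; split.
  apply/forallP => b; apply/implyP; rewrite inE => /mapP [l lL ->].
  by rewrite blk_card.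
apply/forallP => x; apply/forallP => y; apply/implyP => xy.
rewrite leqNgt; apply/negP => /card_gt1P [b1 [b2 []]].
rewrite /B0 !in_set => /andP [/mapP [l1 h1 ->] /andP [x1 y1]] /andP [/mapP [l2 h2 ->] /andP [x2 y2]] ne.
have ne' : l1 != l2 by apply: contraNneq ne => ->.
have := blk_inter h1 h2 ne'; rewrite leqNgt => /negP; apply.
by apply/card_gt1P; exists x, y; rewrite !in_setI x1 x2 y1 y2 xy.
Qed.

Lemma uniqL : uniq (map blk L).
Proof. by rewrite (map_inj_in_uniq blk_inj). Qed.

Lemma B0card : #|B0| = 7.
Proof. by rewrite cardsE; move/card_uniqP: uniqL => ->. Qed.

Lemma P0card : #|P0| = 3.
Proof.
rewrite cardsE; apply/card_uniqP.
rewrite (map_inj_in_uniq (f := blk)) //.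
by move=> l1 l2 /L3L h1 /L3L h2; apply: blk_inj.
Qed.

Lemma B0max : max_ppc_size B0 3.
Proof.
apply/andP; split.
  apply/existsP; exists P0; rewrite P0card eqxx andbT.
  apply/andP; split.
    apply/subsetP => b; rewrite /P0 /B0 !in_set => /mapP [l /L3L lL ->].
    by apply/mapP; exists l.
  apply/forallP => b1; apply/implyP; rewrite /P0 in_set => /mapP [l1 h1 ->].
  apply/forallP => b2; apply/implyP; rewrite /P0 in_set => /mapP [l2 h2 ->].
  apply/implyP => ne.
  have ne' : l1 != l2 by apply: contraNneq ne => ->.
  rewrite -setI_eq0 -cards_eq0 blkI (cardblk (fun i => (i \in l1) && (i \in l2))).
  by move/allP: Lok3 => /(_ l1 h1) /allP /(_ l2 h2); rewrite (negbTE ne').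
apply/negP => /existsP [P /andP [pp /eqP P4]].
by have := no_ppc4 B0pack pp; rewrite P4.
Qed.

Theorem theorem4p8 : beta 3 13 4 = 7.
Proof.
apply/eqP; rewrite eqn_leq; apply/andP; split.
  apply/bigmax_leqP => B /andP [pk /andP [/existsP [P /andP [pp /eqP P3]] _]].
  exact: upper pk pp P3.
rewrite -{1}B0card.
apply: (leq_bigmax_cond (P := fun B => is_packing 4 B && max_ppc_size B 3)).
by rewrite B0pack B0max.
Qed.
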